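(* Let $\Theta=\{1,\ldots,M\}$ be a finite universe of $M$ elements, let $\mathbf{p}=[p_1,\ldots,p_M]$ be a probability mass function on $\Theta$, and let $\mathbf{R}=\{r_{mn}\}_{m,n=1}^M$ be a stochastic matrix (noise channel). Define $\tilde{p}_n=\sum_{m=1}^M p_m r_{mn}$ and $\tilde{\mathbf p}=[\tilde p_1,\ldots,\tilde p_M]$. Let $\mathbf{q}=[q_1,\ldots,q_M]$ be a vector of real quality values. Let $\Theta_0\subset\Theta$ be a fixed initial set. For $t=1,2,\ldots$, let $\theta_t$ be drawn from $\mathbf{p}$ and let $\hat{\theta}_t\in\Theta$ satisfy $\Pr(\hat{\theta}_t=n\mid\theta_t=m)=r_{mn}$, with the pairs $(\theta_t,\hat\theta_t)$ independent across $t$. Set $\Theta_t=\Theta_{t-1}\cup\{\hat{\theta}_t\}$ and $Q_t=\sum_{\theta\in\Theta_t}q_\theta$. For $k\ge 1$ define the $k$th-order quality-prevalence function $D^k_{\Theta_0}(\tilde{\mathbf{p}},\mathbf{q})=\sum_{\theta\notin\Theta_0}q_\theta\tilde{p}_\theta^k$. Then for every positive integer $T$, $$E[Q_T\mid\Theta_0]=Q_0-\sum_{k=1}^T(-1)^k\binom{T}{k}D^k_{\Theta_0}(\tilde{\mathbf{p}},\mathbf{q}).$$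
   Context: This models technology-aided discovery: an explorer initially knows $\Theta_0$; at each step an element is drawn according to $\mathbf p$, a supporting technology reports a noisy identification $\hat\theta_t$ with misclassification probabilities $r_{mn}$, and the explorer adds $\hat\theta_t$ to her known set. Each element $\theta$ has quality $q_\theta$, and $Q_t$ is the total quality of the known set at time $t$ (so $Q_0=\sum_{\theta\in\Theta_0}q_\theta$). *)

(* Defs.v *)
From HB Require Import structures.
From mathcomp Require Import all_boot all_order all_algebra.
Set Implicit Arguments. Unset Strict Implicit. Unset Printing Implicit Defensive.
Import Order.TTheory GRing.Theory Num.Theory.
Local Open Scope ring_scope.

Section Discovery.
Variables (R : realFieldType) (M : nat).

Definition is_pmf (p : 'I_M -> R) : Prop :=
  (forall m, 0 <= p m) /\ \sum_(m < M) p m = 1.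

(* r is a (row-)stochastic matrix: r m n = Pr(hat theta = n | theta = m) *)
Definition is_stochastic (r : 'I_M -> 'I_M -> R) : Prop :=
  (forall m n, 0 <= r m n) /\ (forall m, \sum_(n < M) r m n = 1).

Definition ptilde (p : 'I_M -> R) (r : 'I_M -> 'I_M -> R) (n : 'I_M) : R :=
  \sum_(m < M) p m * r m n.

Definition quality (q : 'I_M -> R) (S : {set 'I_M}) : R :=
  \sum_(th in S) q th.

Definition known_set (Theta0 : {set 'I_M}) (w : seq ('I_M * 'I_M)) : {set 'I_M} :=
  foldl (fun S x => S :|: [set x.2]) Theta0 w.

(* probability of an outcome sequence of pairs (theta_t, hat theta_t),
   independent across t, each with law Pr(theta=m, hat theta=n) = p_m r_mn *)
Definition path_prob (p : 'I_M -> R) (r : 'I_M -> 'I_M -> R)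
  (w : seq ('I_M * 'I_M)) : R :=
  \prod_(x <- w) (p x.1 * r x.1 x.2).

Definition expected_QT (p : 'I_M -> R) (r : 'I_M -> 'I_M -> R) (q : 'I_M -> R)
  (Theta0 : {set 'I_M}) (T : nat) : R :=
  \sum_(w : T.-tuple ('I_M * 'I_M))
     path_prob p r w * quality q (known_set Theta0 w).

Definition Dk (k : nat) (Theta0 : {set 'I_M}) (pt : 'I_M -> R) (q : 'I_M -> R) : R :=
  \sum_(th < M | th \notin Theta0) q th * pt th ^+ k.

End Discovery.

(* Main.v *)
Require Import Defs.
From HB Require Import structures.
From mathcomp Require Import all_boot all_order all_algebra.
From mathcomp Require Import ring.
Import Order.TTheory GRing.Theory Num.Theory.
Local Open Scope ring_scope.

Lemma sum_tupleS (X : finType) (R : nmodType) n (F : n.+1.-tuple X -> R) :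
  \sum_(w : n.+1.-tuple X) F w = \sum_(x : X) \sum_(w : n.-tuple X) F (cons_tuple x w).
Proof.
rewrite pair_big /= (reindex (fun xw : X * n.-tuple X => cons_tuple xw.1 xw.2)) //=.
exists (fun w => (thead w, behead_tuple w)) => [[x w] _|w _] /=.
  by congr pair; apply: val_inj.
by rewrite [RHS]tuple_eta; apply: val_inj.
Qed.

Section Key.
Variables (R : realFieldType) (M : nat) (p : 'I_M -> R) (r : 'I_M -> 'I_M -> R)
  (q : 'I_M -> R).
Hypotheses (hp : is_pmf p) (hr : is_stochastic r).

Lemma sum_pt : \sum_n ptilde p r n = 1.
Proof.
rewrite /ptilde exchange_big /=.
case: hp => _ <-; apply: eq_bigr => m _.
by rewrite -mulr_sumr; case: hr => _ ->; rewrite mulr1.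
Qed.

Lemma sum_pair (G : 'I_M -> R) :
  \sum_(x : 'I_M * 'I_M) p x.1 * r x.1 x.2 * G x.2 = \sum_n ptilde p r n * G n.
Proof.
rewrite -(pair_big xpredT xpredT (fun m n => p m * r m n * G n)) /=.
rewrite exchange_big; apply: eq_bigr => n _; by rewrite /ptilde mulr_suml.
Qed.

Lemma key T : forall S, expected_QT p r q S T =
  \sum_th q th * (1 - (th \notin S)%:R * (1 - ptilde p r th) ^+ T).
Proof.
elim: T => [|T IH] S.
  rewrite /expected_QT (big_pred1 [tuple]) => [|w]; last by rewrite /= [w]tuple0.
  rewrite /path_prob big_nil mul1r /quality /= big_mkcond /=.
  apply: eq_bigr => th _; case: (th \in S) => /=; by rewrite expr0 ?mul0r ?mul1r ?subr0 ?subrr ?mulr1 ?mulr0.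

rewrite /expected_QT. rewrite (@sum_tupleS _ _ T).
transitivity (\sum_(x : 'I_M * 'I_M) p x.1 * r x.1 x.2 *
   \sum_th q th * (1 - (th \notin S :|: [set x.2])%:R * (1 - ptilde p r th) ^+ T)).
  apply: eq_bigr => x _; rewrite -IH /expected_QT mulr_sumr; apply: eq_bigr => w _.
  by rewrite /path_prob big_cons mulrA.
under eq_bigr do rewrite mulr_sumr.
rewrite exchange_big /=; apply: eq_bigr => th _.
rewrite (sum_pair (fun n => q th * (1 - (th \notin S :|: [set n])%:R * (1 - ptilde p r th) ^+ T))).
case: (boolP (th \in S)) => thS /=.
  under eq_bigr do rewrite in_setU thS /= mul0r subr0 mulr1.
  by rewrite -mulr_suml sum_pt mul1r mul0r subr0 mulr1.
rewrite (bigD1 th) //= in_setU in_set1 eqxx orbT /= mul0r subr0 mulr1.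
under eq_bigr => n hn do rewrite in_setU in_set1 eq_sym (negbTE hn) (negbTE thS) /= mul1r.
rewrite -mulr_suml.
have : \sum_(n | n != th) ptilde p r n = 1 - ptilde p r th.
  by have := sum_pt; rewrite (bigD1 th) //= => <-; rewrite addrC addrK.
move=> ->; rewrite mul1r exprS; ring.
Qed.
End Key.

Lemma binom1 (R : comPzRingType) (x : R) T :
  (1 - x) ^+ T = 1 + \sum_(1 <= k < T.+1) (-1) ^+ k * ('C(T, k))%:R * x ^+ k.
Proof.
rewrite exprBn big_ord_recl /= !expr0 expr1n bin0 !mul1r mulr1n.
congr (_ + _); rewrite big_add1 /= big_mkord; apply: eq_bigr => i _.
by rewrite expr1n mulr1 -mulr_natr mulrAC.
Qed.

Theorem proposition4p2 (R : realFieldType) (M : nat)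
  (p : 'I_M -> R) (r : 'I_M -> 'I_M -> R) (q : 'I_M -> R)
  (Theta0 : {set 'I_M}) (T : nat) :
  is_pmf p -> is_stochastic r -> (0 < T)%N ->
  expected_QT p r q Theta0 T =
    quality q Theta0
    - \sum_(1 <= k < T.+1) (-1) ^+ k * ('C(T, k))%:R * Dk k Theta0 (ptilde p r) q.
Proof.
move=> hp hr _; rewrite (@key R M p r q hp hr).
rewrite (bigID (fun th => th \in Theta0)) /= /quality.
under eq_bigr => th hth do rewrite hth /= mul0r subr0 mulr1.
congr (_ + _).
rewrite /Dk.
under [in RHS]eq_bigr do rewrite mulr_sumr.
rewrite [in RHS]exchange_big /= -sumrN; apply: eq_bigr => th hth.
rewrite hth mul1r binom1 opprD addrA subrr add0r mulrN mulr_sumr; congr (- _).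
by apply: eq_bigr => k _; ring.
Qed.
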